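(* Let $n\geq 3$. For every triangulation $T\in\mathcal{T}_n$ there exists $T'\in\mathcal{T}^{(3)}_n$ such that $T\rhd T'$.
   Context: Label the vertices of a convex $n$-gon by $1,\dots,n$ in cyclic order; $\mathrm{Diag}_n = \{\{i,j\} \subseteq [n]: i-j\not\equiv \pm1 \pmod n\}$; two diagonals cross if they meet in the interior of the polygon (their four endpoints are distinct and interleave cyclically). A triangulation is identified with its set of diagonals, and $\mathcal{T}_n$ is the set of triangulations. Swapping relation: for $\{i,j\},\{i',j'\}\in\mathrm{Diag}_n$ written with $i<j$ and $i'<j'$, write $\{i,j\}\rhd\{i',j'\}$ if either $\{i,j\}$ and $\{i',j'\}$ do not cross (in particular $d\rhd d$ for every $d$), or $i'<i<j'<j<n$ and $j'-i>1$. For $T,T'\in\mathcal{T}_n$, write $T\rhd T'$ if $d\rhd d'$ for all $d\in T$ and $d'\in T'$. A parenthesization of an ordered list of symbols $\sigma_1,\dots,\sigma_m$ is a way to insert parentheses into $\sigma_1\sigma_2\cdots\sigma_m$ so that it is read as $m-1$ applications of a binary product. $k$-parenthesizations are defined recursively: a $0$-parenthesization is a single symbol. For odd $k\geq 1$, a $k$-parenthesization is one of the form $\pi_1(\pi_2(\cdots(\pi_{\ell-1}(\pi_\ell\sigma))\cdots))$ with $\ell \geq 0$, $\sigma$ a single symbol and $\pi_1,\dots,\pi_\ell$ $(k-1)$-parenthesizations (of consecutive blocks of symbols). For even $k \geq 2$, a $k$-parenthesization is one of the form $(\cdots((\sigma\pi_1)\pi_2)\cdots\pi_{\ell-1})\pi_\ell$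 with $\ell\ge 0$, $\sigma$ a single symbol and $\pi_i$ $(k-1)$-parenthesizations. Triangulations $T\in\mathcal{T}_n$ are in bijection with parenthesizations of $\sigma_1,\dots,\sigma_{n-1}$: $T$ corresponds to the unique parenthesization in which, for every triangle $\{i,j,k\}$ of $T$ with $i<j<k$ (triangles may use sides of the polygon), the product $\sigma_i\cdots\sigma_{k-1}$ is formed by multiplying $\sigma_i\cdots\sigma_{j-1}$ and $\sigma_j\cdots\sigma_{k-1}$. $\mathcal{T}^{(k)}_n$ is the set of triangulations corresponding to $k$-parenthesizations under this bijection. *)

(* Defs.v *)
From mathcomp Require Import all_boot.
Set Implicit Arguments. Unset Strict Implicit. Unset Printing Implicit Defensive.

(* Vertices of the convex n-gon are 1..n in cyclic order.  A diagonal {i,j}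
   is represented by the ordered pair (i,j) with i < j. *)

Definition is_diag (n i j : nat) : bool :=
  [&& 1 <= i, i.+1 < j, j <= n & ~~ ((i == 1) && (j == n))].

Definition cross (i j i' j' : nat) : bool :=
  [&& i < i', i' < j & j < j'] || [&& i' < i, i < j' & j' < j].

(* sets of diagonals are relations on ordered pairs *)
Definition triangulation (n : nat) (T : rel nat) : Prop :=
  [/\ (forall i j, T i j -> is_diag n i j),
      (forall i j i' j', T i j -> T i' j' -> ~~ cross i j i' j') &
      (forall i j, is_diag n i j -> ~~ T i j ->
         exists i' j', T i' j' /\ cross i j i' j')].

Definition swap_diag (n i j i' j' : nat) : bool :=
  ~~ cross i j i' j' || [&& i' < i, i < j', j' < j, j < n & 1 < j' - i].

Definition swapT (n : nat) (T T' : rel nat) : Prop :=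
  forall i j i' j', T i j -> T' i' j' -> swap_diag n i j i' j'.

(* parenthesizations = binary trees whose leaves are the symbols *)
Inductive ptree : Type := Leaf | Node of ptree & ptree.

Fixpoint nleaves (t : ptree) : nat :=
  match t with Leaf => 1 | Node a b => nleaves a + nleaves b end.

(* t = pi_1 (pi_2 (... (pi_l sigma))) with all pi_i satisfying P *)
Fixpoint rspine (P : ptree -> bool) (t : ptree) : bool :=
  match t with Leaf => true | Node a b => P a && rspine P b end.
(* t = (((sigma pi_1) pi_2) ...) pi_l with all pi_i satisfying P *)
Fixpoint lspine (P : ptree -> bool) (t : ptree) : bool :=
  match t with Leaf => true | Node a b => lspine P a && P b end.

Fixpoint kpar (k : nat) (t : ptree) : bool :=
  match k with
  | 0 => if t is Leaf then true else false
  | k'.+1 => if odd k'.+1 then rspine (kpar k') t else lspine (kpar k') t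
  end.

(* is_node t s i j k : when the leaves of t are sigma_s, sigma_{s+1}, ...,
   t contains the product of sigma_i..sigma_{j-1} and sigma_j..sigma_{k-1}. *)
Fixpoint is_node (t : ptree) (s i j k : nat) : bool :=
  match t with
  | Leaf => false
  | Node a b =>
      [&& i == s, j == s + nleaves a & k == s + nleaves a + nleaves b]
      || is_node a s i j k || is_node b (s + nleaves a) i j k
  end.

Definition edgeT (n : nat) (T : rel nat) (a b : nat) : bool :=
  [|| b == a.+1, (a == 1) && (b == n) | T a b].

Definition triangle (n : nat) (T : rel nat) (i j k : nat) : bool :=
  [&& 1 <= i, i < j, j < k, k <= n, edgeT n T i j, edgeT n T j k & edgeT n T i k].

Definition corresponds (n : nat) (T : rel nat) (t : ptree) : Prop :=
  nleaves t = n.-1 /\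
  forall i j k, triangle n T i j k -> is_node t 1 i j k.

Definition in_Tk (k n : nat) (T : rel nat) : Prop :=
  triangulation n T /\ exists t, kpar k t /\ corresponds n T t.

(* Main.v *)
Require Import Defs.
From mathcomp Require Import all_boot.
From mathcomp Require Import zify.
Set Implicit Arguments. Unset Strict Implicit.

Fixpoint nodeI (t : ptree) (s i j : nat) : bool :=
  match t with
  | Leaf => false
  | Node a b => [&& i == s & j == s + nleaves a + nleaves b]
      || nodeI a s i j || nodeI b (s + nleaves a) i j
  end.

Definition intI t s a b :=
  nodeI t s a b || [&& b == a.+1, s <= a & a < s + nleaves t].

Lemma nleaves_gt0 t : 0 < nleaves t.
Proof. elim: t => //= a IHa b IHb; lia. Qed.

Lemma nodeI_range t s i j : nodeI t s i j -> [/\ s <= i, i.+1 < j & j <= s + nleaves t].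
Proof.
elim: t s => //= a IHa b IHb s.
have ha := nleaves_gt0 a; have hb := nleaves_gt0 b.
case/orP => [/orP [H|/IHa [? ? ?]] | /IHb [? ? ?]]; split; lia.
Qed.

Lemma nodeI_root t s : 1 < nleaves t -> nodeI t s s (s + nleaves t).
Proof. case: t => //= a b _; rewrite addnA !eqxx. done. Qed.

Lemma intI_range t s i j : intI t s i j -> [/\ s <= i, i < j & j <= s + nleaves t].
Proof.
case/orP => [/nodeI_range [? ? ?]|H]; split; lia.
Qed.

Lemma nodeI_lam t s i j i' j' :
  nodeI t s i j -> nodeI t s i' j' -> ~~ cross i j i' j'.
Proof.
elim: t s => //= a IHa b IHb s.
have ha := nleaves_gt0 a; have hb := nleaves_gt0 b.
case/orP => [/orP [H|H] | H]; case/orP => [/orP [H'|H'] | H'];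
  try (exact: (IHa _ H H')); try (exact: (IHb _ H H')); rewrite /cross;
  repeat match goal with
  | K : is_true (nodeI _ _ _ _) |- _ => move/nodeI_range: K => [? ? ?]
  end; lia.
Qed.

Lemma nodeI_complete t s i j :
  s <= i -> i.+1 < j -> j <= s + nleaves t ->
  nodeI t s i j \/ exists i' j', nodeI t s i' j' /\ cross i j i' j'.
Proof.
elim: t s => [|a IHa b IHb] s /=; first lia.
have ha := nleaves_gt0 a; have hb := nleaves_gt0 b.
move=> h1 h2 h3.
case: (leqP j (s + nleaves a)) => hj.
  case: (IHa s h1 h2 hj) => [H|[i' [j' [H1 H2]]]].
    by left; rewrite H orbT.
  by right; exists i', j'; rewrite H1 orbT.
case: (leqP (s + nleaves a) i) => hi.
  case: (IHb (s + nleaves a) hi h2 (leq_trans h3 _)) => [|H|[i' [j' [H1 H2]]]].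
  - by rewrite addnA.
  - by left; rewrite H !orbT.
  - by right; exists i', j'; rewrite H1 !orbT.
case: (boolP ((i == s) && (j == s + nleaves a + nleaves b))) => Hr.
  by left; apply/orP; left; apply/orP; left.
case: (ltnP s i) => hsi.
  right; exists s, (s + nleaves a); split.
    by rewrite /= (@nodeI_root a s) ?orbT //; lia.
  rewrite /cross; lia.
right; exists (s + nleaves a), (s + nleaves a + nleaves b); split.
  rewrite /= (@nodeI_root b (s + nleaves a)) ?orbT //; lia.
rewrite /cross; lia.
Qed.

Lemma intI_Node a b s x y :
  intI (Node a b) s x y <->
  (x = s /\ y = s + nleaves a + nleaves b) \/ intI a s x y \/ intI b (s + nleaves a) x y.
Proof.
rewrite /intI /=; split.
  case/orP => [/orP [/orP [H|H]|H]|H].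
  - by left; move/andP: H => [/eqP -> /eqP ->].
  - by right; left; rewrite H.
  - by right; right; rewrite H.
  - case: (ltnP x (s + nleaves a)) => hx.
      by right; left; apply/orP; right; lia.
    by right; right; apply/orP; right; lia.
case => [[-> ->]|[/orP [H|H]|/orP [H|H]]].
- by rewrite !eqxx.
- by rewrite H orbT.
- have := nleaves_gt0 b => ?; apply/orP; right; lia.
- by rewrite H !orbT.
- apply/orP; right; lia.
Qed.

Lemma intI_triangle t s a b c : a < b -> b < c ->
  intI t s a b -> intI t s b c -> intI t s a c -> is_node t s a b c.
Proof.
elim: t s => [|A IHA B IHB] s hab hbc.
  by move=> _ _; rewrite /intI /=; lia.
move=> H1 H2 H3.
have ha := nleaves_gt0 A; have hb := nleaves_gt0 B.
have H3n : nodeI (Node A B) s a c.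
  move: H3; rewrite /intI; case/orP => // H; lia.
move: H3n => /= /orP [/orP [H|H]|H].
- move/intI_Node: H1 => [[? ?]|[K|K]]; try lia;
  move/intI_Node: H2 => [[? ?]|[K'|K']]; try lia;
  try (move/intI_range: K => [? ? ?]; lia);
  try (move/intI_range: K' => [? ? ?]; lia).
  move/intI_range: K => [? ? ?]; move/intI_range: K' => [? ? ?].
  apply/orP; left; apply/orP; left; lia.
- move/nodeI_range: (H) => [? ? ?].
  move/intI_Node: H1 => [[? ?]|[K|K]]; try lia;
    last (move/intI_range: K => [? ? ?]; lia).
  move/intI_Node: H2 => [[? ?]|[K'|K']]; try lia;
    last (move/intI_range: K' => [? ? ?]; lia).
  by rewrite (IHA s) ?orbT //; rewrite /intI H.
- move/nodeI_range: (H) => [? ? ?].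
  move/intI_Node: H1 => [[? ?]|[K|K]]; try lia;
    first (move/intI_range: K => [? ? ?]; lia).
  move/intI_Node: H2 => [[? ?]|[K'|K']]; try lia;
    first (move/intI_range: K' => [? ? ?]; lia).
  by rewrite (IHB (s + nleaves A)) ?orbT //; rewrite /intI H.
Qed.

Fixpoint gg (X Y : ptree) : ptree :=
  match Y with
  | Leaf => Node X Leaf
  | Node U r => if U is Leaf then Node X Y else Node (gg X U) r
  end.

Fixpoint F2 (t : ptree) : ptree :=
  match t with Leaf => Leaf | Node a b => gg (F2 a) (F2 b) end.

Fixpoint F3 (t : ptree) : ptree :=
  match t with Leaf => Leaf | Node a b => Node (F2 a) (F3 b) end.

Lemma nleaves_gg X Y : nleaves (gg X Y) = nleaves X + nleaves Y.
Proof.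
elim: Y => //= U IHU r _; case: U IHU => //= U1 U2 ->; lia.
Qed.

Lemma nleaves_F2 t : nleaves (F2 t) = nleaves t.
Proof. elim: t => //= a Ha b Hb; by rewrite nleaves_gg Ha Hb. Qed.

Lemma nleaves_F3 t : nleaves (F3 t) = nleaves t.
Proof. elim: t => //= a _ b ->; by rewrite nleaves_F2. Qed.

Lemma kpar2_Node a b : kpar 2 (Node a b) = kpar 2 a && kpar 1 b.
Proof. by []. Qed.
Lemma kpar3_Node a b : kpar 3 (Node a b) = kpar 2 a && kpar 3 b.
Proof. by []. Qed.
Lemma kpar1_Node a b : kpar 1 (Node a b) = kpar 0 a && kpar 1 b.
Proof. by []. Qed.

Lemma kpar2_gg X Y : kpar 2 X -> kpar 2 Y -> kpar 2 (gg X Y).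
Proof.
elim: Y => [|U IHU r _] hX.
  by move=> _; rewrite [gg _ _]/= kpar2_Node hX.
case: U IHU => [|U1 U2] IHU.
  move=> H; rewrite kpar2_Node in H; case/andP: H => _ H.
  by rewrite [gg _ _]/= kpar2_Node hX kpar1_Node H.
rewrite [gg _ _]/= !kpar2_Node; case/andP => /(IHU hX) -> ->; done.
Qed.

Lemma kpar2_F2 t : kpar 2 (F2 t).
Proof. elim: t => //= a Ha b Hb; exact: kpar2_gg. Qed.

Lemma kpar3_F3 t : kpar 3 (F3 t).
Proof. elim: t => // a _ b Hb; by rewrite [F3 _]/= kpar3_Node Hb kpar2_F2. Qed.

Lemma nodeI_gg X Y s i j : nodeI (gg X Y) s i j ->
  nodeI X s i j \/ nodeI Y (s + nleaves X) i j \/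
  (i = s /\ (nodeI Y (s + nleaves X) (s + nleaves X) j \/ j = s + nleaves X + nleaves Y)).
Proof.
elim: Y => [|U IHU r _] /=.
  case/orP => [/orP [/andP [/eqP -> /eqP ->]|H]|//].
    by right; right; split => //; right.
  by left.
case: U IHU => [|U1 U2] IHU.
  rewrite /=; case/orP => [/orP [/andP [/eqP -> /eqP ->]|H]|H].
  - by right; right; split => //; right; rewrite /= addnA.
  - by left.
  - by right; left.
case/orP => [/orP [/andP [/eqP -> /eqP ->]|H]|H].
- by right; right; split => //; right; rewrite nleaves_gg /=; lia.
- case: (IHU H) => [K|[K|[-> [K|K]]]].
  + by left.
  + by right; left; rewrite K orbT.
  + by right; right; split => //; left; rewrite K orbT.
  + right; right; split => //; left; rewrite K.
    rewrite (@nodeI_root (Node U1 U2) (s + nleaves X)) ?orbT // /=; have := nleaves_gt0 U1; have := nleaves_gt0 U2; lia.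
- change (is_true (nodeI r (s + nleaves (gg X (Node U1 U2))) i j)) in H; rewrite nleaves_gg addnA in H.
  by right; left; rewrite H !orbT.
Qed.

Lemma good2 t s i j i' j' : nodeI t s i j -> nodeI (F2 t) s i' j' -> cross i j i' j' ->
  [&& i' < i, i < j', j' < j & 1 < j' - i].
Proof.
elim: t s i j i' j' => [|A IHA B IHB] s i j i' j' //.
move=> H H' Hc.
have hb := nleaves_gt0 B; have ha := nleaves_gt0 A.
have Hc' := Hc; rewrite /cross in Hc'.
move: H' => /nodeI_gg; rewrite !nleaves_F2 => H'.
move: H => /= /orP [/orP [Hr|HA]|HB].
- move/andP: Hr => [/eqP ? /eqP ?].
  case: H' => [K|[K|[? [K|K]]]];
  try (move/nodeI_range: K; rewrite ?nleaves_F2 => -[? ? ?]); lia.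
- move/nodeI_range: (HA) => [? ? ?].
  case: H' => [K|[K|[? [K|K]]]]; first exact: (IHA _ _ _ _ _ HA K Hc);
  try (move/nodeI_range: K; rewrite ?nleaves_F2 => -[? ? ?]); lia.
- move/nodeI_range: (HB) => [? ? ?].
  case: H' => [K|[K|[? [K|K]]]]; first (move/nodeI_range: K; rewrite ?nleaves_F2 => -[? ? ?]; lia).
  + exact: (IHB _ _ _ _ _ HB K Hc).
  + move/nodeI_range: (K) => [? ? ?].
    case: (ltnP (s + nleaves A) i) => him.
      have := IHB _ _ _ _ _ HB K; rewrite /cross => Q.
      have {}Q := Q ltac:(lia). lia.
    lia.
  + lia.
Qed.

Lemma good3 t s i j i' j' : nodeI t s i j -> nodeI (F3 t) s i' j' -> cross i j i' j' ->
  [&& i' < i, i < j', j' < j, j < s + nleaves t & 1 < j' - i].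
Proof.
elim: t s i j i' j' => [|A IHA B IHB] s i j i' j' //.
move=> H H' Hc.
have hb := nleaves_gt0 B; have ha := nleaves_gt0 A.
have Hc' := Hc; rewrite /cross in Hc'.
move: H' => /= /orP [/orP [H'|H']|H']; rewrite ?nleaves_F2 ?nleaves_F3 in H'.
- move/andP: H' => [/eqP ? /eqP ?].
  have := nodeI_range H; rewrite /= => -[? ? ?]; lia.
- have := nodeI_range H'; rewrite ?nleaves_F2 => -[? ? ?].
  move: H => /= /orP [/orP [Hr|HA]|HB].
  + lia.
  + have := good2 HA H' Hc; move/nodeI_range: HA => [? ? ?]; rewrite /=; lia.
  + move/nodeI_range: HB => [? ? ?]; lia.
- have := nodeI_range H'; rewrite ?nleaves_F3 => -[? ? ?].
  move: H => /= /orP [/orP [Hr|HA]|HB].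
  + lia.
  + move/nodeI_range: HA => [? ? ?]; lia.
  + have := IHB _ _ _ _ _ HB H' Hc; rewrite /= addnA; lia.
Qed.

Lemma apex n T : triangulation n T -> forall a b, 1 <= a -> a.+1 < b -> b <= n ->
  edgeT n T a b -> exists m, [/\ a < m, m < b, edgeT n T a m & edgeT n T m b].
Proof.
case => Hd Hnc Hmax a b h1 h2 h3 Hab.
pose P := fun x => (a < x < b) && edgeT n T a x.
have exP : exists i, P i by exists a.+1; rewrite /P /edgeT eqxx; apply/andP; split => //; lia.
have ubP : forall i, P i -> i <= b by move=> i /andP [/andP [_ ?] _]; lia.
case: (ex_maxnP exP ubP) => m /andP [/andP [hm1 hm2] Ham] maxm.
exists m; split => //.
case E: (edgeT n T m b) => //.
move: E; rewrite /edgeT => /negbT; rewrite !negb_or => /and3P [E1 E2 E3].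
have Hdg : is_diag n m b.
  rewrite /is_diag; apply/and4P; split => //; try lia.
case: (Hmax _ _ Hdg E3) => i' [j' [Tij Hc]].
have := Hd _ _ Tij; rewrite /is_diag => /and4P [d1 d2 d3 _].
move: Hc; rewrite /cross => /orP [/and3P [c1 c2 c3] | /and3P [c1 c2 c3]].
- move: Hab; rewrite /edgeT => /or3P [Hab|Hab|Tab].
  + lia.
  + move/andP: Hab => [_ /eqP Hb]; lia.
  + case/negP: (Hnc _ _ _ _ Tab Tij); rewrite /cross.
    apply/orP; left; apply/and3P; split => //; lia.
- case: (ltngtP i' a) => hia.
  + move: Hab; rewrite /edgeT => /or3P [Hab|Hab|Tab].
    * lia.
    * move/andP: Hab => [/eqP Ha _]; lia.
    * case/negP: (Hnc _ _ _ _ Tab Tij); rewrite /cross.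
      apply/orP; right; apply/and3P; split => //; lia.
  + move: Ham; rewrite /edgeT => /or3P [Ham|Ham|Tam].
    * lia.
    * move/andP: Ham => [_ /eqP Hm]; lia.
    * case/negP: (Hnc _ _ _ _ Tam Tij); rewrite /cross.
      apply/orP; left; apply/and3P; split => //; lia.
  + have : P j' by rewrite /P /edgeT -hia Tij !orbT andbT; apply/andP; split; lia.
    move/maxm; lia.
Qed.

Lemma build n T : triangulation n T -> forall d a b, b - a <= d -> 1 <= a -> a < b -> b <= n ->
  edgeT n T a b -> exists t, nleaves t = b - a /\
    forall i j, nodeI t a i j -> ((i == a) && (j == b)) || T i j.
Proof.
move=> HT; elim => [|d IH] a b hd h1 h2 h3 Hab; first by move: hd h2; lia.
case: (ltnP a.+1 b) => hb; last first.
  exists Leaf; split => //=; move: hb h2; lia.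
case: (apex HT h1 hb h3 Hab) => m [ham hmb Ham Hmb].
case: (IH a m _ h1 ham _ Ham) => [||t1 [n1 H1]]; first (by move: hd hmb; lia); first (by move: hmb h3; lia).
case: (IH m b _ _ hmb h3 Hmb) => [||t2 [n2 H2]]; first (by move: hd ham; lia); first (by move: ham h1; lia).
exists (Node t1 t2); split; first by rewrite /= n1 n2; move: ham hmb; lia.
move=> i j /= /orP [/orP [Hr|K]|K].
- apply/orP; left; rewrite n1 n2 in Hr; move: Hr ham hmb; lia.
- case/orP: (H1 _ _ K) => [/andP [/eqP ei /eqP ej]|->]; last by rewrite orbT.
  subst i j; move/nodeI_range: K => [_ K _].
  move: Ham; rewrite /edgeT => /or3P [E|E|->]; last by rewrite orbT.
  + by rewrite (eqP E) ltnn in K.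
  + move/andP: E => [_ /eqP Em]; move: hmb h3; rewrite Em => X Y.
    by have := leq_trans X Y; rewrite ltnn.
- have em : a + nleaves t1 = m by rewrite n1; move: ham; lia.
  rewrite em in K.
  case/orP: (H2 _ _ K) => [/andP [/eqP ei /eqP ej]|->]; last by rewrite orbT.
  subst i j; move/nodeI_range: K => [_ K _].
  move: Hmb; rewrite /edgeT => /or3P [E|E|->]; last by rewrite orbT.
  + by rewrite (eqP E) ltnn in K.
  + move/andP: E => [/eqP Em _]; move: ham h1; rewrite Em => X Y.
    by have := leq_trans X Y; rewrite ltnn.
Qed.
Definition Tp (t : ptree) (n : nat) : rel nat :=
  fun i j => nodeI t 1 i j && ~~ ((i == 1) && (j == n)).

Theorem lemma3p8 (n : nat) (hn : 3 <= n) (T : rel nat) :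
  triangulation n T -> exists T' : rel nat, in_Tk 3 n T' /\ swapT n T T'.
Proof.
move=> HT; have HT' := HT; case: HT' => Hd Hnc Hmax.
have hedge : edgeT n T 1 n by rewrite /edgeT !eqxx orbT.
case: (@build n T HT n 1 n _ _ _ _ hedge) => [||||tT [nT HtT]]; try lia.
have Tin : forall i j, T i j -> nodeI tT 1 i j.
  move=> i j Tij; have := Hd _ _ Tij; rewrite /is_diag => /and4P [d1 d2 d3 d4].
  case: (@nodeI_complete tT 1 i j d1 d2) => [|//|[i' [j' [K C]]]].
    by rewrite nT; lia.
  case/orP: (HtT _ _ K) => [/andP [/eqP ei /eqP ej]| Tk].
    by move: C; rewrite /cross ei ej; lia.
  by move/negP: (Hnc _ _ _ _ Tij Tk).
have nt' : nleaves (F3 tT) = n.-1 by rewrite nleaves_F3 nT; lia.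
have edge_int : forall a b, 1 <= a -> a < b -> b <= n ->
    edgeT n (Tp (F3 tT) n) a b -> intI (F3 tT) 1 a b.
  move=> a b h1 h2 h3; rewrite /edgeT => /or3P [E|E|E].
  - rewrite /intI; apply/orP; right; rewrite nt'; move: E; lia.
  - move/andP: E => [/eqP -> /eqP ->].
    have := @nodeI_root (F3 tT) 1; rewrite nt' => R.
    have e : 1 + n.-1 = n by lia.
    rewrite e in R; rewrite /intI R ?orbT //; lia.
  - by move/andP: E => [E _]; rewrite /intI E.
exists (Tp (F3 tT) n); split; [split; [split|exists (F3 tT); split] |].
- move=> i j /andP [K K2]; move/nodeI_range: K; rewrite nt' => -[? ? ?].
  rewrite /is_diag; apply/and4P; split => //; lia.
- move=> i j i' j' /andP [K _] /andP [K' _]; exact: nodeI_lam K K'.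
- move=> i j Hdg HnT; move/and4P: (Hdg) => [d1 d2 d3 d4].
  case: (@nodeI_complete (F3 tT) 1 i j d1 d2) => [|K|[i' [j' [K C]]]].
  + by rewrite nt'; lia.
  + by rewrite /Tp K d4 in HnT.
  + exists i', j'; split => //; rewrite /Tp K /=.
    apply/negP => /andP [/eqP e1 /eqP e2]; move: C; rewrite /cross e1 e2; lia.
- exact: kpar3_F3.
- split => // i j k; rewrite /triangle.
  case/andP => h1; case/andP => h2; case/andP => h3; case/andP => h4.
  case/andP => e1; case/andP => e2 e3.
  apply: intI_triangle => //; apply: edge_int => //; lia.
- move=> i j i' j' Tij /andP [K' _].
  have K := Tin _ _ Tij.
  rewrite /swap_diag; case C: (cross i j i' j') => //=.
  have := good3 K K' C; rewrite nT; lia.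
Qed.
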